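(* In the Mallows setting: - $W(N,0)=\theta^{N-1}[N-1]_\theta!$ for all $N\ge1$; - for all $N\ge2$ and $1\le k\le N-1$, $$W(N,k)=\theta^{N-k-1}\,[N-1]_\theta!\,\sum_{i=k}^{N-1}\frac{[k]_\theta}{[i]_\theta}.$$
   Context: Permutations of $\{1,\dots,N\}$ are written in one-line notation; $\mathfrak S_N$ is the set of all of them. An entry $\pi_j$ is a left-to-right maximum if $\pi_j>\pi_i$ for all $i<j$; $\mathrm{inv}(\pi)$ is the number of pairs $i<j$ with $\pi_i>\pi_j$. Let $\theta>0$. For $0\le k\le N-1$, a permutation $\pi\in\mathfrak S_N$ is $k$-winnable if the first index $j>k$ such that $\pi_j$ is a left-to-right maximum satisfies $\pi_j=N$. Mallows setting: - $W(N,k)=\sum_{k\text{-winnable }\pi\in\mathfrak S_N}\theta^{\mathrm{inv}(\pi)}$; - $[m]_\theta=1+\theta+\cdots+\theta^{m-1}$; - $[m]_\theta!=[1]_\theta\cdots[m]_\theta$, with $[0]_\theta!=1$. *)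

(* Defs.v *)
From HB Require Import structures.
From mathcomp Require Import all_boot all_order all_algebra all_fingroup.
Set Implicit Arguments. Unset Strict Implicit. Unset Printing Implicit Defensive.
Import Order.TTheory GRing.Theory Num.Theory.

(* Convention: a permutation of {1..N} is modelled as s : 'S_N (a permutation
   of 'I_N = {0..N-1}); position j (1-based) is the ordinal j-1 and the value
   pi_j (1-based) is (s (j-1)) + 1.  So the value N corresponds to N.-1. *)

Definition ltr_max (N : nat) (s : 'S_N) (j : 'I_N) : bool :=
  [forall i : 'I_N, (i < j)%N ==> (s i < s j)%N].

Definition inv (N : nat) (s : 'S_N) : nat :=
  #|[set p : 'I_N * 'I_N | (p.1 < p.2)%N && (s p.2 < s p.1)%N]|.

(* k-winnable: the first 1-based index j > k (i.e. 0-based index >= k) that is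
   a left-to-right maximum exists and carries the value N (0-based: N.-1). *)
Definition winnable (N k : nat) (s : 'S_N) : bool :=
  [exists j : 'I_N,
     [&& (k <= j)%N, ltr_max s j,
         [forall i : 'I_N, ((k <= i)%N && (i < j)%N) ==> ~~ ltr_max s i]
       & (val (s j) == N.-1)]].

Local Open Scope ring_scope.

Definition W (R : nzRingType) (theta : R) (N k : nat) : R :=
  \sum_(s : 'S_N | winnable k s) theta ^+ inv s.

Definition qint (R : nzRingType) (theta : R) (m : nat) : R :=
  \sum_(i < m) theta ^+ i.

Definition qfact (R : nzRingType) (theta : R) (m : nat) : R :=
  \prod_(1 <= i < m.+1) qint theta i.

(* Main.v *)
Require Import Defs.
From HB Require Import structures.
From mathcomp Require Import all_boot all_order all_algebra all_fingroup.
From mathcomp Require Import zify ring.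
Import Order.TTheory GRing.Theory Num.Theory.
Set Implicit Arguments. Unset Strict Implicit. Unset Printing Implicit Defensive.

Definition code n (s : 'S_n) (j : 'I_n) : nat :=
  #|[set i : 'I_n | (i < j)%N && (s j < s i)%N]|.

Lemma card_lt n (j : nat) : (j <= n)%N -> #|[set i : 'I_n | (i < j)%N]| = j.
Proof.
move=> hj; rewrite -sum1_card.
rewrite (eq_bigl (fun i : 'I_n => (i < j)%N)); last by move=> i; rewrite inE.
by rewrite (big_ord_narrow hj) sum1_card card_ord.
Qed.

Lemma code_le n (s : 'S_n) j : (code s j <= j)%N.
Proof.
apply: leq_trans (eq_leq (card_lt (ltnW (ltn_ord j)))).
by apply: subset_leq_card; apply/subsetP=> i; rewrite !inE => /andP[].
Qed.

Lemma code_lt n (s : 'S_n) j : (code s j < n)%N.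
Proof. exact: leq_ltn_trans (code_le s j) (ltn_ord j). Qed.

Definition codeF n (s : 'S_n) : {ffun 'I_n -> 'I_n} :=
  [ffun j => Ordinal (code_lt s j)].

Lemma imsub n (s t : 'S_n) (j : 'I_n) : (forall i : 'I_n, (j < i)%N -> s i = t i) ->
  s @: [set i : 'I_n | (i <= j)%N] \subset t @: [set i : 'I_n | (i <= j)%N].
Proof.
move=> h; apply/subsetP=> x /imsetP[a]; rewrite inE => ha ->.
apply/imsetP; exists (t^-1 (s a))%g; last by rewrite permKV.
rewrite inE; case: (leqP (t^-1 (s a))%g j) => // hb.
have := h _ hb; rewrite permKV => /perm_inj eab.
by move: ha; rewrite -eab leqNgt hb.
Qed.

Lemma rank_eq n (u : 'S_n) (j : 'I_n) :
  #|[set x in u @: [set i : 'I_n | (i <= j)%N] | (x < u j)%N]| + code u j =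
  #|[set i : 'I_n | (i < j)%N]|.
Proof.
have -> : [set x in u @: [set i : 'I_n | (i <= j)%N] | (x < u j)%N] =
   u @: [set i : 'I_n | (i <= j)%N && (u i < u j)%N].
  apply/setP=> x; rewrite !inE; apply/andP/imsetP.
    case=> /imsetP[a]; rewrite inE => ha -> hl; exists a => //; by rewrite inE ha.
  by case=> a; rewrite inE => /andP[ha hl] ->; split=> //; apply/imsetP; exists a; rewrite ?inE.
rewrite card_imset; last exact: perm_inj.
rewrite /code -(cardID (fun i : 'I_n => (u j < u i)%N) [set i : 'I_n | (i < j)%N]) addnC.
congr (_ + _); apply: eq_card => i; rewrite !inE.
  by rewrite andbC.
rewrite /in_mem /=.
case: (ltngtP i j) => hij /=; rewrite ?andbT ?andbF //.
- have : u i != u j by apply/eqP => /perm_inj e; move: hij; rewrite e ltnn.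
  rewrite -val_eqE /=; case: ltngtP => //.
- have -> : i = j by apply: val_inj.
  by rewrite ltnn.
Qed.

Lemma key n (s t : 'S_n) (j : 'I_n) : (forall i : 'I_n, (j < i)%N -> s i = t i) ->
  code s j = code t j -> s j = t j.
Proof.
move=> h hc.
have eV : s @: [set i : 'I_n | (i <= j)%N] = t @: [set i : 'I_n | (i <= j)%N].
  apply/eqP; rewrite eqEsubset imsub //= imsub // => i /h ->.
  by [].
have r1 := rank_eq s j; have r2 := rank_eq t j.
rewrite -r2 eV hc in r1; move/addIn: r1 => r.
have sV : s j \in t @: [set i : 'I_n | (i <= j)%N].
  by rewrite -eV; apply/imsetP; exists j; rewrite ?inE.
have tV : t j \in t @: [set i : 'I_n | (i <= j)%N].
  by apply/imsetP; exists j; rewrite ?inE.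
set V := t @: _ in r sV tV.
have pr : forall a b : 'I_n, a \in V -> b \in V -> (a < b)%N ->
   [set x in V | (x < a)%N] \proper [set x in V | (x < b)%N].
  move=> a b aV bV ab; apply/properP; split.
    by apply/subsetP=> x; rewrite !inE => /andP[-> /ltn_trans]; apply.
  by exists a; rewrite !inE ?aV ?ab ?ltnn.
apply: val_inj; case: (ltngtP (s j) (t j)) => // hlt.
  by have := proper_card (pr _ _ sV tV hlt); rewrite r ltnn.
by have := proper_card (pr _ _ tV sV hlt); rewrite r ltnn.
Qed.

Lemma codeF_inj n : injective (@codeF n).
Proof.
move=> s t e.
have hc : forall j, code s j = code t j.
  by move=> j; have := congr1 (fun f : {ffun 'I_n -> 'I_n} => nat_of_ord (f j)) e; rewrite !ffunE.
suff H : forall d (j : 'I_n), (n - j <= d)%N -> s j = t j.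
  by apply/permP => j; apply: (H n); rewrite leq_subr.
elim=> [|d IH] j hj.
  by move: hj; rewrite leqn0 subn_eq0 leqNgt ltn_ord.
apply: key (hc j) => i hi; apply: IH.
by move: hj hi; case: i => i /= ?; lia.
Qed.

Definition Qf n : 'I_n.+1 -> pred 'I_n.+1 := fun i x => (x <= i)%N.

Lemma card_fam n : #|pfamily ord0 predT (@Qf n)| = n.+1`!.
Proof.
have := big_distr_big_dep (one := 1%N) (times := muln) (plus := addn) ord0 predT (@Qf n) (fun _ _ => 1%N).
rewrite big1_eq sum1_card; move <-.
rewrite (eq_bigr (fun i : 'I_n.+1 => i.+1)); last first.
  move=> i _; rewrite (eq_bigl (fun x : 'I_n.+1 => (x < i.+1)%N)) //.
  by rewrite (big_ord_narrow (ltn_ord i)) sum1_card card_ord.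
by rewrite fact_prod big_add1 /= big_mkord.
Qed.

Lemma sum_codeF n (R : nzRingType) (G : {ffun 'I_n.+1 -> 'I_n.+1} -> R) :
  (\sum_(s : 'S_n.+1) G (codeF s) = \sum_(f in pfamily ord0 predT (@Qf n)) G f)%R.
Proof.
have e : [set codeF s | s in [set: 'S_n.+1]] = [set f | f \in pfamily ord0 predT (@Qf n)].
  apply/eqP; rewrite eqEcard; apply/andP; split.
    apply/subsetP => f /imsetP[s _ ->]; rewrite inE; apply/pfamilyP; split.
      by apply/subsetP.
    by move=> x _; rewrite ffunE /= unfold_in /Qf /=; exact: code_le.
  rewrite card_imset; last exact: codeF_inj.
  by rewrite cardsT card_Sn cardsE card_fam.
rewrite (eq_bigl (fun f => f \in [set codeF s | s in [set: 'S_n.+1]])); last first.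
  by move=> f; rewrite e inE.
rewrite big_imset /=; last by move=> x y _ _; apply: codeF_inj.
by apply: eq_bigl => s; rewrite inE.
Qed.

Lemma ltr_code n (s : 'S_n) j : ltr_max s j = (code s j == 0).
Proof.
rewrite /ltr_max /code cards_eq0; apply/forallP/eqP.
  move=> h; apply/setP => i; rewrite !inE; apply/negbTE; apply/negP => /andP[hij hlt].
  by have := h i; rewrite hij /= => /(ltn_trans hlt); rewrite ltnn.
move=> e i; apply/implyP => hij.
have : i \notin [set i : 'I_n | (i < j)%N && (s j < s i)%N] by rewrite e inE.
rewrite inE hij /= -leqNgt leq_eqVlt => /orP[|] //.
by move=> /eqP/val_inj/perm_inj ei; move: hij; rewrite ei ltnn.
Qed.

Lemma max_ltr n (s : 'S_n) (j : 'I_n) :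
  (val (s j) == n.-1) = ltr_max s j && [forall i : 'I_n, (j < i)%N ==> ~~ ltr_max s i].
Proof.
have le1 : forall i : 'I_n, (s i <= n.-1)%N.
  by move=> i; move: (ltn_ord (s i)); lia.
have mx : forall i : 'I_n, val (s i) == n.-1 -> ltr_max s i.
  move=> i /eqP hi; apply/forallP => i'; apply/implyP => hii'.
  have : s i' != s i by apply/eqP => /perm_inj e; move: hii'; rewrite e ltnn.
  rewrite -val_eqE hi; have := le1 i'; rewrite leq_eqVlt => /orP[->|] //.
  by move=> h _; apply: (leq_trans h); rewrite -hi.
apply/idP/idP.
  move=> hj; rewrite mx //=; apply/forallP => i; apply/implyP => hji.
  apply/negP => /forallP /(_ j); rewrite hji /= (eqP hj) => h.
  by have := le1 i; rewrite leqNgt h.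
case/andP => hj /forallP ha.
have hn : (n.-1 < n)%N by move: (ltn_ord j); lia.
set x := Ordinal hn; set m := (s^-1 x)%g.
have sm : s m = x by rewrite permKV.
case: (ltngtP m j) => hmj.
- move/forallP: hj => /(_ m); rewrite hmj /= sm => h.
  by have := le1 j; rewrite leqNgt h.
- by have := ha m; rewrite hmj /= mx // sm.
- have -> : j = m by apply: val_inj.
  by rewrite sm.
Qed.

Definition Z n k (s : 'S_n) (j : 'I_n) : bool :=
  [forall i : 'I_n, (k <= i)%N ==> ((code s i == 0) == (i == j))].

Lemma win_Z n k (s : 'S_n) : winnable k s = [exists j : 'I_n, (k <= j)%N && Z k s j].
Proof.
apply/existsP/existsP => -[j].
  case/and4P => hk hl hb he; exists j; rewrite hk /=.
  move: he; rewrite max_ltr hl /= => ha.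
  apply/forallP => i; apply/implyP => hki; rewrite -ltr_code.
  case: (ltngtP i j) => hij.
  - have := forallP hb i; rewrite hki hij /= => /negbTE ->.
    by rewrite (_ : (i == j) = false) //; apply/eqP => e; move: hij; rewrite e ltnn.
  - have := forallP ha i; rewrite hij /= => /negbTE ->.
    by rewrite (_ : (i == j) = false) //; apply/eqP => e; move: hij; rewrite e ltnn.
  - have -> : i = j by apply: val_inj.
    by rewrite hl eqxx.
case/andP => hk /forallP hz; exists j.
have hl : ltr_max s j by have := hz j; rewrite hk /= eqxx ltr_code => /eqP.
have no : forall i : 'I_n, (k <= i)%N -> i != j -> ~~ ltr_max s i.
  move=> i hki hij; have := hz i; rewrite hki /= ltr_code (negbTE hij).
  by move=> /eqP ->.
rewrite hk hl /=; apply/andP; split.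
- apply/forallP => i; apply/implyP => /andP[hki hij]; apply: no => //.
  by apply/eqP => e; move: hij; rewrite e ltnn.
- rewrite max_ltr hl /=; apply/forallP => i; apply/implyP => hji; apply: no.
    exact: leq_trans hk (ltnW hji).
  by apply/eqP => e; move: hji; rewrite e ltnn.
Qed.

Lemma win_sum (R : nzRingType) n k (s : 'S_n) :
  ((winnable k s)%:R = \sum_(j : 'I_n | (k <= j)%N) (Z k s j)%:R :> R)%R.
Proof.
rewrite win_Z; case: existsP => [[j /andP[hk hz]]|hn].
  rewrite (bigD1 j) //= hz big1 ?addr0 //.
  move=> i /andP[hki hij]; case hzi: (Z k s i) => //.
  have := forallP hz i; have := forallP hzi i; have := forallP hzi j.
  rewrite hki hk /= eqxx [j == i]eq_sym (negbTE hij) => _ h1 h2.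
  by move: h2; rewrite (eqP h1).
rewrite big1 // => j hk; case hz: (Z k s j) => //.
by case: hn; exists j; rewrite hk hz.
Qed.

Lemma inv_code n (s : 'S_n) : Defs.inv s = (\sum_(j : 'I_n) code s j)%N.
Proof.
rewrite /Defs.inv /code -sum1_card.
rewrite (eq_bigr (fun j : 'I_n => \sum_(i : 'I_n) ((i < j) && (s j < s i))%N)%N); last first.
  move=> j _; rewrite -sum1_card big_mkcond /=; apply: eq_bigr => i _.
  by rewrite inE; case: (_ && _).
rewrite exchange_big pair_bigA /= big_mkcond /=; apply: eq_bigr => p _.
by rewrite inE; case: (_ && _).
Qed.
Local Open Scope ring_scope.

Lemma prod_bool (R : comNzRingType) (I : finType) (b : I -> bool) :
  \prod_(i : I) (b i)%:R = [forall i, b i]%:R :> R.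
Proof.
case: (pickP (fun i => ~~ b i)) => [i hi|hn].
  rewrite (bigD1 i) //= (negbTE hi) mul0r.
  case: forallP => // h; by move: hi; rewrite h.
rewrite big1; last by move=> i _; have := hn i; case: (b i).
case: forallP => // h; case: h => i; by have := hn i; case: (b i).
Qed.

Definition g (R : nzRingType) (theta : R) (k j i : nat) (x : nat) : R :=
  theta ^+ x * (if (k <= i)%N then ((x == 0)%N == (i == j)) else true)%:R.

Definition H (R : nzRingType) (theta : R) (k j i : nat) : R :=
  if (i < k)%N then qint theta i.+1 else if i == j then 1 else theta * qint theta i.

Lemma inner (R : comNzRingType) (theta : R) n k (j i : 'I_n.+1) :
  \sum_(x : 'I_n.+1 | (x <= i)%N) g theta k j i x = H theta k j i.
Proof.
rewrite (eq_bigl (fun x : 'I_n.+1 => (x < i.+1)%N)) //.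
rewrite (big_ord_narrow (ltn_ord i)) /= /H /g.
case: (ltnP i k) => hik.
  rewrite /qint; apply: eq_bigr => x _ /=; by rewrite mulr1.
case: eqP => hij.
  rewrite big_ord_recl /= expr0 mulr1 big1 ?addr0 // => x _.
  by rewrite mulr0.
rewrite big_ord_recl /= mulr0 add0r /qint big_distrr /=.
by apply: eq_bigr => x _; rewrite mulr1 exprS.
Qed.

Lemma W_formula (R : comNzRingType) (theta : R) n k :
  W theta n.+1 k = \sum_(j : 'I_n.+1 | (k <= j)%N) \prod_(i : 'I_n.+1) H theta k j i.
Proof.
rewrite /W big_mkcond /=.
rewrite (eq_bigr (fun s => \sum_(j : 'I_n.+1 | (k <= j)%N)
                   \prod_(i : 'I_n.+1) g theta k j i (codeF s i))); last first.
  move=> s _; rewrite (_ : (if _ then _ else _) = theta ^+ Defs.inv s * (winnable k s)%:R);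
    last by case: (winnable k s); rewrite ?mulr1 ?mulr0.
  rewrite win_sum big_distrr /=; apply: eq_bigr => j _.
  rewrite /g big_split /= prodrXr prod_bool inv_code.
  congr (_ ^+ _ * _).
    by apply: eq_bigr => i _; rewrite ffunE.
  congr (_%:R); congr (nat_of_bool _); rewrite /Z; apply/idP/idP => /forallP h; apply/forallP => i; have := h i; rewrite ffunE /=;
    by case: (k <= i)%N.
rewrite exchange_big /=; apply: eq_bigr => j _.
rewrite (sum_codeF (fun f => \prod_(i : 'I_n.+1) g theta k j i (f i))).
rewrite -(big_distr_big_dep ord0 predT (@Qf n) (fun i x => g theta k j i x)).
by apply: eq_bigr => i _; rewrite -(inner theta k j i).
Qed.

Lemma alg (F : fieldType) (A qk P Q th qj : F) m : th != 0 -> qj != 0 ->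
  P * (th*qj) = th^+m.+1 * Q -> (A*qk) * P = th^+m * (A*Q) * (qk/qj).
Proof.
move=> ht hq e.
have eP : P = th^+m * Q / qj.
  apply: (mulIf (mulf_neq0 ht hq)); rewrite e exprS. field. done.
rewrite eP; field; done.
Qed.

Lemma qint_gt0 (R : realFieldType) (theta : R) j : 0 < theta -> (1 <= j)%N -> 0 < qint theta j.
Proof.
move=> ht; case: j => // j _; rewrite /qint big_ord_recl expr0.
apply: ltr_pwDl => //; apply: sumr_ge0 => i _; apply: exprn_ge0; exact: ltW.
Qed.

Lemma perj (R : realFieldType) (theta : R) (ht : 0 < theta) N k j :
  (1 <= k)%N -> (k <= j)%N -> (j < N)%N ->
  \prod_(0 <= i < N) H theta k j i =
  theta ^+ (N - k - 1) * qfact theta (N - 1) * (qint theta k / qint theta j).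
Proof.
move=> hk hkj hjN.
have hkN : (k <= N)%N by lia.
rewrite (big_cat_nat (leq0n k) hkN) /=.
have e1 : \prod_(0 <= i < k) H theta k j i = qfact theta k.
  rewrite (eq_big_nat _ _ (F2 := fun i => qint theta i.+1)); last first.
    by move=> i /andP[_ hi]; rewrite /H hi.
  by rewrite /qfact big_add1 /=.
have e2 : (\prod_(k <= i < N) H theta k j i) * (theta * qint theta j) =
          theta ^+ (N - k).-1.+1 * \prod_(k <= i < N) qint theta i.
  rewrite prednK; last by lia.
  rewrite -prodr_const_nat -big_split /=.
  rewrite (big_cat_nat hkj (ltnW hjN)) (big_ltn hjN) /=.
  rewrite [in RHS](big_cat_nat hkj (ltnW hjN)) (big_ltn hjN) /=.
  rewrite (eq_big_nat _ _ (F1 := H theta k j) (F2 := fun i => theta * qint theta i)); last first.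
    move=> i /andP[h1 h2]; rewrite /H ltnNge h1 /=.
    by have -> : (i == j) = false by apply/negbTE; rewrite neq_ltn h2.
  rewrite [X in _ * (_ * X) * _](eq_big_nat _ _ (F1 := H theta k j) (F2 := fun i => theta * qint theta i)); last first.
    move=> i /andP[h1 h2]; rewrite /H ltnNge (leq_trans hkj (ltnW h1)) /=.
    by have -> : (i == j) = false by apply/negbTE; rewrite neq_ltn h1 orbT.
  rewrite /H ltnNge hkj eqxx /=; ring.
have eA : qfact theta k = (\prod_(1 <= i < k) qint theta i) * qint theta k.
  by rewrite /qfact big_nat_recr.
have eQ : qfact theta (N - 1) = (\prod_(1 <= i < k) qint theta i) * \prod_(k <= i < N) qint theta i.
  rewrite /qfact (_ : (N - 1).+1 = N); last by lia.
  by rewrite (big_cat_nat hk hkN).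
rewrite e1 eA eQ (_ : (N - k - 1)%N = (N - k).-1); last by lia.
apply: alg e2; first by rewrite gt_eqF.
by rewrite gt_eqF // qint_gt0 //; lia.
Qed.

Unset Implicit Arguments.
Theorem corollary6p4 (R : realFieldType) (theta : R) (htheta : 0 < theta) :
  (forall N : nat, (1 <= N)%N ->
     W theta N 0 = theta ^+ (N - 1) * qfact theta (N - 1)) /\
  (forall N k : nat, (2 <= N)%N -> (1 <= k <= N - 1)%N ->
     W theta N k =
       theta ^+ (N - k - 1) * qfact theta (N - 1) *
       \sum_(k <= i < N) (qint theta k / qint theta i)).
Proof.
split.
  case=> // n _; rewrite W_formula [LHS](bigD1 ord0) //= [X in _ + X]big1 ?addr0; last first.
    move=> j hj; rewrite big_ord_recl /H /= (_ : (0 == j :> nat) = false); last first.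
      by apply/negbTE; move: hj; apply: contra => /eqP e; apply/eqP/val_inj.
    by rewrite /qint big_ord0 mulr0 mul0r.
  rewrite big_ord_recl /H /= mul1r subn1 /=.
  rewrite (eq_bigr (fun i : 'I_n => theta * qint theta i.+1)) // big_split /=.
  by rewrite prodr_const card_ord /qfact big_add1 /= big_mkord.
case=> // n k _ /andP[hk hkn].
rewrite W_formula big_distrr /= big_geq_mkord /=.
apply: eq_bigr => j hj.
by rewrite -(big_mkord xpredT (H theta k j)) perj.
Qed.
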